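(* Let $\Omega$ be a classical Cartan domain of rank $r$ (setup below). Then its Shilov boundary is \[S_\Omega=\Big\{z\in\mathbb C^d:\ \Delta^{(\ell)}(z,z)=\binom{r}{\ell}\ \text{ for all } 1\le \ell\le r\Big\}.\]
   Context: Let $\Omega\subset\mathbb C^d$ be a classical (irreducible) Cartan domain of rank $r$ in its Harish-Chandra realization, viewed as the open unit ball of a Cartan factor $Z\cong\mathbb C^d$. Let $G$ be the identity component of $\mathrm{Aut}(\Omega)$ and $\mathbb K=\{g\in G: g(0)=0\}$; $\mathbb K$ consists of linear maps and so acts on all of $\mathbb C^d$. There is a Jordan frame $e_1,\dots,e_r$ (pairwise orthogonal minimal tripotents) such that every $z\in\mathbb C^d$ has a polar decomposition $z=k\cdot\sum_{j=1}^r t_je_j$ with $k\in\mathbb K$ and uniquely determined singular numbers $t_1\ge\dots\ge t_r\ge 0$; the spectral norm is $\|z\|=t_1$ and $\Omega=\{z:\|z\|<1\}$. The Shilov boundary of $\Omega$ is $S_\Omega=\{k\cdot e: k\in\mathbb K\}$ where $e=e_1+\dots+e_r$. The Jordan triple determinant $\Delta(z,w)$ is the unique $\mathbb K$-invariant sesqui-analytic polynomial (holomorphic in $z$, antiholomorphic in $w$) with $\Delta(z,z)=\prod_{j=1}^r(1-t_j^2)$. Write $\Delta(z,w)=\sum_{\ell=0}^r(-1)^\ell\Delta^{(\ell)}(z,w)$, where $\Delta^{(\ell)}$ is a sesqui-analytic polynomial homogeneous of bidegree $(\ell,\ell)$ (and $\Delta^{(0)}=1$). *)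

(* Defs.v *)
From HB Require Import structures.
From mathcomp Require Import all_boot all_order all_algebra.
From mathcomp Require Import Rstruct.
From mathcomp Require Import complex.
From mathcomp Require Import mpoly.

Set Implicit Arguments.
Unset Strict Implicit.
Unset Printing Implicit Defensive.

Import Order.TTheory GRing.Theory Num.Theory.
Local Open Scope ring_scope.
Local Open Scope complex_scope.

Notation Re_t := Rdefinitions.R.
Definition CC : numClosedFieldType := Rdefinitions.R[i].

(* Points of C^d are row vectors 'rV[CC]_d; an element k of K (a linear map
   of C^d) is a d x d matrix acting by z |-> z *m k. *)

Definition frame_point (d r : nat) (e : 'I_r -> 'rV[CC]_d) (t : 'I_r -> Re_t)
  : 'rV[CC]_d := \sum_(j < r) ((t j)%:C : CC) *: e j.

Definition sing_seq (r : nat) (t : 'I_r -> Re_t) : Prop :=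
  (forall i, 0 <= t i) /\ (forall i j : 'I_r, (i <= j)%N -> t j <= t i).

Definition polar (d r : nat) (K : pred 'M[CC]_d) (e : 'I_r -> 'rV[CC]_d)
    (z : 'rV[CC]_d) (t : 'I_r -> Re_t) : Prop :=
  sing_seq t /\ exists2 k, k \in K & z = frame_point e t *m k.

(* Sesqui-analytic polynomials on C^d x C^d: polynomials in the 2d variables
   (z_1, ..., z_d, conj w_1, ..., conj w_d), i.e. elements of {mpoly CC[d+d]};
   the first d variables stand for z, the last d for conj w. *)
Definition sesq_eval (d : nat) (P : {mpoly CC[d + d]}) (z w : 'rV[CC]_d) : CC :=
  P.@[fun i : 'I_(d + d) =>
        match split i with inl a => z 0 a | inr b => (w 0 b)^* end].

Definition degz (d : nat) (m : 'X_{1.. d + d}) : nat :=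
  (\sum_(i < d) m (lshift d i))%N.
Definition degw (d : nat) (m : 'X_{1.. d + d}) : nat :=
  (\sum_(i < d) m (rshift d i))%N.

Definition bicomp (d : nat) (P : {mpoly CC[d + d]}) (a b : nat)
  : {mpoly CC[d + d]} :=
  \sum_(m <- msupp P | (degz m == a) && (degw m == b)) P@_m *: 'X_[m].

(* Delta^(l), defined by  Delta = \sum_l (-1)^l Delta^(l)  with Delta^(l) of
   bidegree (l, l). *)
Definition DeltaL (d : nat) (P : {mpoly CC[d + d]}) (l : nat)
  : {mpoly CC[d + d]} :=
  (-1) ^+ l *: bicomp P l l.

(* The standing setup of the paper for a classical Cartan domain of rank r in
   C^d: K (the isotropy group of 0 in the identity component of Aut(Omega))
   is a group of linear maps of C^d; e_1..e_r is a Jordan frame giving polar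
   decompositions with uniquely determined singular numbers; P represents the
   Jordan triple determinant Delta(z,w), a K-invariant sesqui-analytic
   polynomial with Delta(z,z) = prod_j (1 - t_j^2), which decomposes as
   \sum_{l=0}^r (-1)^l Delta^(l) with Delta^(l) of bidegree (l,l). *)
Record cartan_setup (d r : nat) (K : pred 'M[CC]_d) (e : 'I_r -> 'rV[CC]_d)
    (P : {mpoly CC[d + d]}) : Prop := CartanSetup {
  K_one : (1%:M : 'M[CC]_d) \in K;
  K_mul : forall k1 k2, k1 \in K -> k2 \in K -> k1 *m k2 \in K;
  K_inv : forall k, k \in K -> (k \in unitmx) /\ (invmx k \in K);
  polar_exists : forall z : 'rV[CC]_d, exists t, polar K e z t;
  polar_unique : forall z t t', polar K e z t -> polar K e z t' -> t = t';
  Delta_invariant : forall k z w, k \in K ->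
      sesq_eval P (z *m k) (w *m k) = sesq_eval P z w;
  Delta_diag : forall z t, polar K e z t ->
      sesq_eval P z z = \prod_(j < r) ((1 - t j ^+ 2)%:C : CC);
  Delta_bideg : forall m, m \in msupp P -> degz m = degw m /\ (degz m <= r)%N
}.

Definition shilov (d r : nat) (K : pred 'M[CC]_d) (e : 'I_r -> 'rV[CC]_d)
    (z : 'rV[CC]_d) : Prop :=
  exists2 k, k \in K & z = (\sum_(j < r) e j) *m k.

(* Main.v *)
Require Import Defs.
From HB Require Import structures.
From mathcomp Require Import all_boot all_order all_algebra.
From mathcomp Require Import Rstruct complex mpoly.
Import GRing.Theory Num.Theory.
Set Implicit Arguments.
Unset Strict Implicit.
Local Open Scope ring_scope.
Local Open Scope complex_scope.

Definition vv (d : nat) (z w : 'rV[CC]_d) (i : 'I_(d + d)) : CC :=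
  match split i with inl a => z 0 a | inr b => (w 0 b)^* end.

Definition Emon (d : nat) (m : 'X_{1.. d + d}) (z w : 'rV[CC]_d) : CC :=
  \prod_(i < d + d) vv z w i ^+ m i.

Lemma conj_realC (x : Re_t) : Num.conj (x%:C : CC) = x%:C.
Proof. by apply/eqP; rewrite eq_complex /= oppr0 !eqxx. Qed.

Lemma sesq_evalE d (P : {mpoly CC[d + d]}) z w :
  sesq_eval P z w = \sum_(m <- msupp P) P@_m * Emon m z w.
Proof. by rewrite /sesq_eval mevalE. Qed.

Lemma sesq_bicomp d (P : {mpoly CC[d + d]}) a b z w :
  sesq_eval (bicomp P a b) z w =
  \sum_(m <- msupp P | (degz m == a) && (degw m == b)) P@_m * Emon m z w.
Proof.
rewrite /sesq_eval /bicomp raddf_sum; apply: eq_bigr => m _.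
etransitivity; first exact: mevalZ. by rewrite mevalX.
Qed.

Lemma Emon_scale d (m : 'X_{1.. d + d}) (c : Re_t) z w :
  Emon m ((c%:C : CC) *: z) ((c%:C : CC) *: w) =
  (c%:C : CC) ^+ (degz m + degw m) * Emon m z w.
Proof.
rewrite /Emon.
have -> : \prod_(i < d + d) vv ((c%:C : CC) *: z) ((c%:C : CC) *: w) i ^+ m i
  = \prod_(i < d + d) ((c%:C : CC) ^+ m i * vv z w i ^+ m i).
  apply: eq_bigr => i _; rewrite /vv; case: split => a.
    by rewrite mxE exprMn.
  by rewrite mxE rmorphM /= conj_realC exprMn.
rewrite big_split /= prodrXr; congr (_ ^+ _ * _).
by rewrite big_split_ord.
Qed.

Lemma sesq_scale d r (P : {mpoly CC[d + d]})
  (H : forall m, m \in msupp P -> degz m = degw m /\ (degz m <= r)%N)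
  (c : Re_t) z w :
  sesq_eval P ((c%:C : CC) *: z) ((c%:C : CC) *: w) =
  \sum_(l < r.+1) (c%:C : CC) ^+ (l + l) * sesq_eval (bicomp P l l) z w.
Proof.
rewrite sesq_evalE.
under [RHS]eq_bigr => l _ do rewrite sesq_bicomp big_distrr big_mkcond /=.
rewrite exchange_big /= big_seq [RHS]big_seq; apply: eq_bigr => m Hm.
have [Hzw Hr] := H m Hm.
rewrite Emon_scale (bigD1 (inord (degz m))) //= big1; last first.
  move=> l Hl; case: ifP => // /andP[/eqP Hl1 _]; move: Hl.
  by rewrite Hl1 inord_val eqxx.
rewrite inordK ?ltnS // -Hzw eqxx addr0 /=.
by rewrite mulrCA.
Qed.
Lemma poly_eq_nat (p q : {poly CC}) :
  (forall n : nat, p.[n%:R] = q.[n%:R]) -> p = q.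
Proof.
move=> H; apply/eqP; rewrite -subr_eq0; apply/negPn/negP => Hn.
have := @max_poly_roots _ (p - q) [seq (n%:R : CC) | n <- iota 0 (size (p - q))] Hn.
rewrite size_map size_iota ltnn. move=> HH; suff: false by []; apply: HH.
  by apply/allP => x /mapP[n _ ->]; rewrite /root hornerD hornerN H subrr.
rewrite map_inj_uniq ?iota_uniq //.
by move=> a b /eqP; rewrite eqr_nat => /eqP.
Qed.

Lemma real_complexC (x y : Re_t) : ((x * y)%:C : CC) = x%:C * y%:C.
Proof. exact: rmorphM. Qed.
Lemma real_complexB (x y : Re_t) : ((x - y)%:C : CC) = x%:C - y%:C.
Proof. exact: rmorphB. Qed.
Lemma real_complexX (x : Re_t) n : ((x ^+ n)%:C : CC) = x%:C ^+ n.
Proof. exact: rmorphXn. Qed.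
Lemma real_complexn n : (((n%:R : Re_t))%:C : CC) = n%:R.
Proof. exact: rmorph_nat. Qed.
Lemma real_complex1 : ((1 : Re_t)%:C : CC) = 1.
Proof. exact: rmorph1. Qed.

Lemma polar_scale d r (K : pred 'M[CC]_d) (e : 'I_r -> 'rV[CC]_d) z t (c : Re_t) :
  0 <= c -> polar K e z t -> polar K e ((c%:C : CC) *: z) (fun j => c * t j).
Proof.
move=> c0 [[t0 tdec] [k Hk ->]]; split.
  by split=> [i|i j Hij]; [apply: mulr_ge0 | apply: ler_wpM2l => //; apply: tdec].
exists k => //.
have -> : frame_point e (fun j => c * t j) = (c%:C : CC) *: frame_point e t.
  rewrite /frame_point scaler_sumr; apply: eq_bigr => j _.
  by rewrite scalerA rmorphM.
exact: scalemxAl.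
Qed.

Lemma key d r K e P (cs : @cartan_setup d r K e P) z t :
  polar K e z t ->
  \poly_(l < r.+1) sesq_eval (bicomp P l l) z z =
  \prod_(j < r) (1 - ((t j ^+ 2)%:C : CC) *: 'X).
Proof.
move=> Hz; apply: poly_eq_nat => n.
pose c := Num.sqrt (n%:R : Re_t).
have hc : c ^+ 2 = n%:R by rewrite sqr_sqrtr ?ler0n.
have := Delta_diag cs (polar_scale (sqrtr_ge0 (n%:R : Re_t)) Hz).
rewrite (sesq_scale (Delta_bideg cs)) => HD.
rewrite horner_poly horner_prod.
transitivity (\sum_(l < r.+1) (c%:C : CC) ^+ (l + l) * sesq_eval (bicomp P l l) z z).
  apply: eq_bigr => l _.
  by rewrite addnn -mul2n exprM -real_complexX hc real_complexn mulrC.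
rewrite HD; apply: eq_bigr => j _.
rewrite !hornerE /= -/c rmorphB rmorph1 exprMn hc mulrC rmorphM rmorph_nat.
reflexivity. Qed.
Lemma binom_poly r :
  (1 - 'X : {poly CC}) ^+ r = \poly_(i < r.+1) ((-1) ^+ i * ('C(r, i))%:R).
Proof.
rewrite addrC exprD1n poly_def; apply: eq_bigr => i _.
rewrite -mul_polyC rmorphM /= rmorph_sign rmorph_nat.
by rewrite mulrAC mulr_natr -mulN1r exprMn expr1n mulr1 exprNn.
Qed.

Lemma sign_sq (l : nat) : ((-1) ^+ l * (-1) ^+ l : CC) = 1.
Proof. by rewrite -exprD addnn -mul2n exprM expr2 mulrNN mulr1 expr1n. Qed.

Lemma sesq_DeltaL d (P : {mpoly CC[d + d]}) l z w :
  sesq_eval (DeltaL P l) z w = (-1) ^+ l * sesq_eval (bicomp P l l) z w.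
Proof. by rewrite /sesq_eval /DeltaL; etransitivity; first exact: mevalZ. Qed.

Lemma poly_eq_natS (p q : {poly CC}) :
  (forall n : nat, p.[n.+1%:R] = q.[n.+1%:R]) -> p = q.
Proof.
move=> H; apply/eqP; rewrite -subr_eq0; apply/negPn/negP => Hn.
have := @max_poly_roots _ (p - q) [seq (n%:R : CC) | n <- iota 1 (size (p - q))] Hn.
rewrite size_map size_iota ltnn => HH; suff: false by []; apply: HH.
  apply/allP => x /mapP[n]; rewrite mem_iota => /andP[n1 _] ->.
  by rewrite /root hornerD hornerN -(prednK n1) H subrr.
rewrite map_inj_uniq ?iota_uniq //.
by move=> a b /eqP; rewrite eqr_nat => /eqP.
Qed.

Theorem lemma2p1 (d r : nat) (K : pred 'M[CC]_d) (e : 'I_r -> 'rV[CC]_d)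
    (P : {mpoly CC[d + d]}) :
  cartan_setup K e P ->
  forall z : 'rV[CC]_d,
    shilov K e z <->
    (forall l : nat, (1 <= l <= r)%N ->
       sesq_eval (DeltaL P l) z z = ('C(r, l))%:R).
Proof.
move=> cs z; split.
  case=> k Hk ->.
  have Hp : polar K e ((\sum_j e j) *m k) (fun _ => 1).
    split; first by split => [i|i j _]; rewrite ?ler01 ?lexx.
    exists k => //; congr (_ *m _); rewrite /frame_point.
    by apply: eq_bigr => j _; rewrite rmorph1 scale1r.
  have := key cs Hp.
  have HQ1 : \prod_(j < r) (1 - (((1 : Re_t) ^+ 2)%:C : CC) *: 'X) = (1 - 'X) ^+ r.
    by rewrite expr1n rmorph1 scale1r prodr_const card_ord.
  rewrite HQ1 binom_poly => Heq l /andP[l1 lr].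
  rewrite sesq_DeltaL.
  move/polyP: Heq => /(_ l); rewrite !coef_poly ltnS lr => ->.
  by rewrite mulrA sign_sq mul1r.
move=> Hl; have [t Ht] := polar_exists cs z; have Hk := key cs Ht.
have HQ : \prod_(j < r) (1 - ((t j ^+ 2)%:C : CC) *: 'X) = (1 - 'X) ^+ r.
  rewrite -Hk binom_poly; apply/polyP => i; rewrite !coef_poly.
  case: ltnP => // ir; case: i ir => [|l] ir.
    have := congr1 (fun p => p.[0]) Hk; rewrite horner_coef0 coef_poly /= => ->.
    rewrite horner_prod big1 ?expr0 ?bin0 ?mul1r // => i _.
    by rewrite !hornerE subr0.
  have := Hl l.+1; move=> /(_ ir); rewrite sesq_DeltaL => <-.
  by rewrite mulrA sign_sq mul1r.
have Ht1 : forall j, t j = 1.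
  move=> j.
  pose A := \prod_(i < r) ('X - ((t i ^+ 2)%:C : CC)%:P).
  pose B := ('X - 1 : {poly CC}) ^+ r.
  have AB : A = B.
    apply: poly_eq_natS => n; set y := (n.+1)%:R : CC.
    have y0 : y != 0 by rewrite pnatr_eq0.
    have := congr1 (fun p => p.[y^-1]) HQ.
    rewrite horner_prod horner_exp !hornerE => E.
    rewrite horner_prod; under eq_bigr do rewrite hornerXsubC.
    transitivity (y ^+ r * \prod_(i < r) (1 - (t i ^+ 2)%:C * y^-1)).
      have -> : y ^+ r = \prod_(i < r) y by rewrite prodr_const card_ord.
      rewrite -big_split; apply: eq_bigr => i _.
      by rewrite /= mulrBr mulr1 mulrCA mulfV ?mulr1.
    move: E; under eq_bigr do rewrite hornerD hornerN hornerZ hornerX; rewrite hornerC => ->.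
    by rewrite -exprMn mulrBr mulr1 mulfV.
  have := congr1 (fun p => p.[(t j ^+ 2)%:C]) AB.
  rewrite /A /B horner_prod horner_exp (bigD1 j) //= !hornerE subrr mul0r.
  move=> /esym/eqP; rewrite expf_eq0 subr_eq0 => /andP[_ /eqP].
  rewrite -(rmorph1 (real_complex Re_t)) => /complexI /eqP.
  rewrite sqrf_eq1 => /orP[/eqP //|/eqP Hm].
  by case: Ht => [[t0 _] _]; have := t0 j; rewrite Hm ler0N1.
case: Ht => _ [k Hk' ->]; exists k => //; congr (_ *m _).
by rewrite /frame_point; apply: eq_bigr => j _; rewrite Ht1 rmorph1 scale1r.
Qed.
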